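(* The set $\mathcal{I}_{\mathrm{str}}(C_{01})$ has the cardinality of the continuum.
   Context: Let $\mathbf{2}=\{0,1\}$. A partial function of arity $n$ on $\mathbf{2}$ is a map $f:\operatorname{dom} f\to\mathbf{2}$ with $\operatorname{dom} f\subseteq \mathbf{2}^n$; it is total if $\operatorname{dom} f=\mathbf{2}^n$. $P_{\mathbf{2}}$ is the set of all partial functions, $O_{\mathbf{2}}$ the set of total ones. Composition $F=f(g_1,\dots,g_n)$ is given by $F(\mathbf{x})=f(g_1(\mathbf{x}),\dots,g_n(\mathbf{x}))$ on $\operatorname{dom} F=\{\mathbf{x}\in\bigcap_i\operatorname{dom} g_i : (g_1(\mathbf{x}),\dots,g_n(\mathbf{x}))\in\operatorname{dom} f\}$. A partial clone is a composition-closed subset of $P_{\mathbf{2}}$ containing all projections; a total clone is one contained in $O_{\mathbf{2}}$. A partial clone $X$ is strong if it contains every restriction of each of its members. For a total clone $C$, $\mathcal{I}_{\mathrm{str}}(C)$ is the set of all strong partial clones $X$ with $X\cap O_{\mathbf{2}}=C$. $C_{01}$ is the total clone generated by the constant functions $c_0$ and $c_1$ (it consists of all projections and all constant functions). *)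

(* Defs.v *)
From mathcomp Require Import all_boot.
Set Implicit Arguments. Unset Strict Implicit. Unset Printing Implicit Defensive.

(* Arguments: tuples x in 2^(n+1), encoded as finite functions 'I_(n.+1) -> bool. *)
Definition arg (n : nat) := {ffun 'I_n.+1 -> bool}.

(* A partial function of arity n.+1 on 2 = {0,1}: value None = outside dom f. *)
Definition pfn (n : nat) := {ffun arg n -> option bool}.

Definition pfun := {n : nat & pfn n}.

Definition mkP (n : nat) (f : pfn n) : pfun := existT pfn n f.

Definition is_total (n : nat) (f : pfn n) : Prop := forall x, f x <> None.

Definition proj (n : nat) (i : 'I_n.+1) : pfn n := [ffun x : arg n => Some (x i)].
Definition cst (n : nat) (b : bool) : pfn n := [ffun _ : arg n => Some b].

Definition comp (k m : nat) (f : pfn k) (g : 'I_k.+1 -> pfn m) : pfn m :=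
  [ffun x : arg m =>
     if [forall i, g i x != None]
     then f [ffun i => odflt false (g i x)]
     else None].

Definition partial_clone (X : pfun -> Prop) : Prop :=
  (forall n (i : 'I_n.+1), X (mkP (proj i))) /\
  (forall k m (f : pfn k) (g : 'I_k.+1 -> pfn m),
      X (mkP f) -> (forall i, X (mkP (g i))) -> X (mkP (comp f g))).

Definition restriction (n : nat) (g f : pfn n) : Prop :=
  forall x, g x <> None -> g x = f x.

Definition strong (X : pfun -> Prop) : Prop :=
  partial_clone X /\
  (forall n (f g : pfn n), X (mkP f) -> restriction g f -> X (mkP g)).

Definition inC01 (n : nat) (f : pfn n) : Prop :=
  is_total f /\ ((exists i, f = proj i) \/ (exists b, f = cst n b)).

Definition total_part_is_C01 (X : pfun -> Prop) : Prop :=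
  forall n (f : pfn n), (X (mkP f) /\ is_total f) <-> inC01 f.

Definition in_Istr_C01 (X : pfun -> Prop) : Prop :=
  strong X /\ total_part_is_C01 X.

(* Main.v *)
Require Import Defs.
From mathcomp Require Import all_boot.
From Stdlib Require Import Classical ClassicalEpsilon FunctionalExtensionality PropExtensionality ProofIrrelevance.
Set Implicit Arguments. Unset Strict Implicit. Unset Printing Implicit Defensive.

Section SB.
Variables (A B : Type) (f : A -> B) (g : B -> A).
Hypotheses (finj : injective f) (ginj : injective g).

Definition Cset (a : A) : Prop :=
  exists n a0, (forall b, g b <> a0) /\ a = iter n (g \o f) a0.

Definition ginv (a : A) : B :=
  match excluded_middle_informative (exists b, g b = a) with
  | left H => proj1_sig (constructive_indefinite_description _ H)
  | right _ => f a end.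

Lemma ginvK a : (exists b, g b = a) -> g (ginv a) = a.
Proof.
move=> H; rewrite /ginv; case: excluded_middle_informative => // H'.
exact: (proj2_sig (constructive_indefinite_description _ H')).
Qed.

Lemma notC_img a : ~ Cset a -> exists b, g b = a.
Proof.
move=> nC; apply: NNPP => nI; apply: nC; exists 0, a; split => //.
by move=> b E; apply: nI; exists b.
Qed.

Definition hSB (a : A) : B :=
  if excluded_middle_informative (Cset a) then f a else ginv a.

Lemma hSB_inj : injective hSB.
Proof.
have key : forall a a', Cset a -> ~ Cset a' -> f a <> ginv a'.
  move=> a a' [n [a0 [H0 ->]]] nC E; have I := notC_img nC; apply: nC.
  exists n.+1, a0; split => //; rewrite iterS /= E ginvK //.
move=> a a'; rewrite /hSB.
case: excluded_middle_informative => Ca; case: excluded_middle_informative => Ca' /=.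
- exact: finj.
- move=> E; by case: (key _ _ Ca Ca').
- move=> E; by case: (key _ _ Ca' Ca).
- move=> E; by rewrite -(ginvK (notC_img Ca)) E ginvK //; exact: notC_img.
Qed.

Lemma hSB_surj b : exists a, hSB a = b.
Proof.
case: (classic (Cset (g b))) => C.
- case: C => [[|n] [a0 [H0 E]]].
    by case: (H0 b).
  exists (iter n (g \o f) a0).
  rewrite iterS /= in E; have Eb := ginj E.
  rewrite /hSB; case: excluded_middle_informative => [_|nC] /=; first by rewrite Eb.
  by case: nC; exists n, a0.
- exists (g b); rewrite /hSB; case: excluded_middle_informative => [//|_] /=.
  apply: ginj; rewrite ginvK //; by exists b.
Qed.

Lemma SB_bij : exists h : A -> B, bijective h.
Proof.
exists hSB.
pose hinv b := proj1_sig (constructive_indefinite_description _ (hSB_surj b)).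
have hK b : hSB (hinv b) = b := proj2_sig (constructive_indefinite_description _ (hSB_surj b)).
exists hinv => [a|b]; last exact: hK.
by apply: hSB_inj; rewrite hK.
Qed.
End SB.

Definition T := {X : pfun -> Prop | in_Istr_C01 X}.

Definition code (X : T) : nat -> bool := fun k =>
  match @unpickle pfun k with
  | Some p => if excluded_middle_informative (proj1_sig X p) then true else false
  | None => false end.

Lemma code_inj : injective code.
Proof.
move=> [X HX] [Y HY] E.
have EXY : X = Y.
  apply: functional_extensionality => p; apply: propositional_extensionality.
  have := congr1 (fun c => c (pickle p)) E; rewrite /code pickleK /=.
  do 2 case: excluded_middle_informative => //.
clear E; move: HX HY; rewrite EXY => HX HY; by rewrite (proof_irrelevance _ HX HY).
Qed.

Definition preserves n (f : pfn n) (I : Type) (R : (I -> bool) -> Prop) : Prop :=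
  forall (r : 'I_n.+1 -> I -> bool), (forall i, R (r i)) ->
  forall vals : I -> bool, (forall t, f [ffun i => r i t] = Some (vals t)) -> R vals.

Lemma preserves_proj n (i : 'I_n.+1) I (R : (I -> bool) -> Prop) : preserves (proj i) R.
Proof.
move=> r Hr vals Hv.
have -> : vals = r i.
  apply: functional_extensionality => t; move: (Hv t); rewrite /proj !ffunE.
  by case.
exact: Hr.
Qed.

Lemma preserves_cst n b I (R : (I -> bool) -> Prop) : R (fun _ => b) -> preserves (cst n b) R.
Proof.
move=> Rb r Hr vals Hv.
have -> : vals = (fun _ => b).
  apply: functional_extensionality => t; move: (Hv t); rewrite /cst !ffunE.
  by case.
exact: Rb.
Qed.

Lemma preserves_restr n (f g : pfn n) I (R : (I -> bool) -> Prop) :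
  preserves f R -> restriction g f -> preserves g R.
Proof.
move=> Pf Rgf r Hr vals Hv; apply: (Pf r Hr) => t.
by rewrite -Rgf Hv.
Qed.

Lemma preserves_comp k m (f : pfn k) (g : 'I_k.+1 -> pfn m) I (R : (I -> bool) -> Prop) :
  preserves f R -> (forall i, preserves (g i) R) -> preserves (Defs.comp f g) R.
Proof.
move=> Pf Pg r Hr vals Hv.
pose x t := [ffun i => r i t] : arg m.
have Hdef : forall t, [forall i, g i (x t) != None].
  move=> t; move: (Hv t); rewrite /Defs.comp ffunE.
  by case: ifP.
pose r' (i : 'I_k.+1) t := odflt false (g i (x t)).
have Hr' : forall i, R (r' i).
  move=> i; apply: (Pg i r Hr) => t.
  move/forallP: (Hdef t) => /(_ i); rewrite /r'.
  by case: (g i (x t)).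
apply: (Pf r' Hr') => t.
move: (Hv t); rewrite /Defs.comp ffunE Hdef.
congr (f _ = _); apply/ffunP => i; by rewrite !ffunE.
Qed.

Definition t0 : 'I_3 := @Ordinal 3 0 isT.
Definition t1 : 'I_3 := @Ordinal 3 1 isT.
Definition t2 : 'I_3 := @Ordinal 3 2 isT.
Definition u0 : 'I_2 := @Ordinal 2 0 isT.
Definition u1 : 'I_2 := @Ordinal 2 1 isT.

Definition LE (v : 'I_2 -> bool) : Prop := v u0 ==> v u1.
Definition R3b (p q s : bool) := (p && q && s) || (~~(p && q) && ~~(p && s) && ~~(q && s)).
Definition R3 (v : 'I_3 -> bool) : Prop := R3b (v t0) (v t1) (v t2).
Definition R3d (v : 'I_3 -> bool) : Prop := R3b (~~ v t0) (~~ v t1) (~~ v t2).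

Definition pt j (t : option 'I_j.+3) : arg j.+2 :=
  [ffun i => if t is Some a then i == a else true].
Definition rho j (v : option 'I_j.+3 -> bool) : Prop :=
  (exists b, forall t, v t = b) \/ (exists c : 'I_j.+3, forall t, v t = pt t c).

Definition XS (S : nat -> bool) (p : pfun) : Prop :=
  let (n, f) := p in
  preserves f LE /\ preserves f R3 /\ preserves f R3d /\
  forall j, S j = false -> preserves f (@rho j).

Lemma XS_clone S : strong (XS S).
Proof.
split; [split|].
- move=> n i /=; split; [|split; [|split]]; try exact: preserves_proj.
  move=> j _; exact: preserves_proj.
- move=> k m f g /= [P1 [P2 [P3 P4]]] Hg.
  split; [|split; [|split]].
  + apply: preserves_comp => // i; by case: (Hg i).
  + apply: preserves_comp => // i; by case: (Hg i) => _ [].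
  + apply: preserves_comp => // i; by case: (Hg i) => _ [_ []].
  + move=> j Sj; apply: preserves_comp; first exact: P4.
    move=> i; case: (Hg i) => _ [_ [_ H]]; exact: H.
- move=> n f g /= [P1 [P2 [P3 P4]]] Rgf.
  split; [|split; [|split]]; try (apply: preserves_restr; eassumption).
  move=> j Sj; apply: preserves_restr; last exact: Rgf; exact: P4.
Qed.

Section Classif.
Variable n : nat.
Variable F : arg n -> bool.
Definition meetA (x y : arg n) : arg n := [ffun i => x i && y i].
Definition joinA (x y : arg n) : arg n := [ffun i => x i || y i].
Definition eA (i : 'I_n.+1) : arg n := [ffun j => j == i].
Definition zeroA : arg n := [ffun _ => false].
Definition oneA : arg n := [ffun _ => true].
Hypothesis mono : forall x y : arg n, (forall i, x i ==> y i) -> F x ==> F y.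
Hypothesis meetP : forall x y : arg n, F x -> F y -> F (meetA x y).
Hypothesis joinP : forall x y : arg n, F (joinA x y) -> F x || F y.

Lemma classif : (exists i, forall x, F x = x i) \/ (exists b, forall x, F x = b).
Proof.
case F0: (F zeroA).
  right; exists true => x; have := @mono zeroA x; rewrite F0 /=; apply.
  by move=> i; rewrite ffunE.
case F1: (F oneA).
2:{ right; exists false => x; apply/negbTE/negP => Fx.
    have : F x ==> F oneA by apply: mono => i; rewrite ffunE implybT.
    by rewrite Fx F1. }
have L : forall k (x : arg n), #|[pred i | x i]| < k -> F x -> exists i, x i && F (eA i).
  elim=> [|k IH] x // Hk Fx.
  have [i xi] : exists i, x i.
    apply: NNPP => nE; move: Fx; have -> : x = zeroA.
      apply/ffunP => j; rewrite ffunE; apply/negbTE/negP => xj; apply: nE; by exists j.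
    by rewrite F0.
  pose x' : arg n := [ffun j => x j && (j != i)].
  have Ex : x = joinA (eA i) x'.
    apply/ffunP => j; rewrite !ffunE; case: (eqVneq j i) => [->|] /=.
    by rewrite xi.
    by rewrite andbT.
  rewrite Ex in Fx; case/orP: (joinP Fx) => [Fe|Fx'].
    by exists i; rewrite xi.
  have Hc : #|[pred j | x' j]| < k.
    have H : #|[pred j | x' j]| < #|[pred j | x j]|.
      rewrite [X in _ < X](cardD1 i) inE xi add1n ltnS.
      apply: subset_leq_card; apply/subsetP => j; rewrite !inE ffunE.
      by case/andP=> -> ->.
    by rewrite -ltnS; apply: leq_trans Hk; rewrite ltnS.
  have [j /andP[x'j Fej]] := IH x' Hc Fx'.
  exists j; move: x'j; rewrite ffunE Fej andbT; by case/andP.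
have [i0 /andP[_ Fi0]] := L _ oneA (ltnSn _) F1.
left; exists i0 => x.
case xi0: (x i0).
  have := @mono (eA i0) x; rewrite Fi0 /=; apply => j; rewrite ffunE.
  by apply/implyP => /eqP ->.
apply/negbTE/negP => Fx.
have [j /andP[xj Fj]] := L _ x (ltnSn _) Fx.
have ji0 : j != i0 by apply/eqP => E; move: xj; rewrite E xi0.
have := meetP Fj Fi0.
have -> : meetA (eA j) (eA i0) = zeroA.
  apply/ffunP => l; rewrite !ffunE; case: (eqVneq l j) => [->|] //=.
  by rewrite (negbTE ji0).
by rewrite F0.
Qed.
End Classif.

Lemma pres_total n (f : pfn n) I (R : (I -> bool) -> Prop) :
  is_total f -> preserves f R -> forall r : 'I_n.+1 -> I -> bool, (forall i, R (r i)) ->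
  R (fun t => odflt false (f [ffun i => r i t])).
Proof.
move=> Ht P r Hr; apply: (P r Hr) => t.
by move: (Ht [ffun i => r i t]); case: (f _).
Qed.

Lemma XS_C01 S : total_part_is_C01 (XS S).
Proof.
move=> n f; split.
- case=> [[P1 [P2 [P3 _]]] Ht].
  pose F x := odflt false (f x).
  have hF : forall x, f x = Some (F x).
    by move=> x; rewrite /F; move: (Ht x); case: (f x).
  have mono : forall x y : arg n, (forall i, x i ==> y i) -> F x ==> F y.
    move=> x y H.
    have := pres_total Ht P1 (r := fun i (u : 'I_2) => if val u == 0 then x i else y i).
    rewrite /LE /=.
    have -> : [ffun i => x i] = x by apply/ffunP => i; rewrite ffunE.
    have -> : [ffun i => y i] = y by apply/ffunP => i; rewrite ffunE.
    by apply.
  have meetP : forall x y : arg n, F x -> F y -> F (meetA x y).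
    move=> x y Fx Fy.
    have := pres_total Ht P2 (r := fun i (u : 'I_3) =>
       if val u == 0 then x i else if val u == 1 then y i else x i && y i).
    rewrite /R3 /=.
    have -> : [ffun i => x i] = x by apply/ffunP => i; rewrite ffunE.
    have -> : [ffun i => y i] = y by apply/ffunP => i; rewrite ffunE.
    have -> : [ffun i => x i && y i] = meetA x y by [].
    rewrite -/(F x) -/(F y) Fx Fy /R3b /= orbF.
    apply => i; by case: (x i); case: (y i).
  have joinP : forall x y : arg n, F (joinA x y) -> F x || F y.
    move=> x y Fxy.
    have := pres_total Ht P3 (r := fun i (u : 'I_3) =>
       if val u == 0 then x i else if val u == 1 then y i else x i || y i).
    rewrite /R3d /=.
    have -> : [ffun i => x i] = x by apply/ffunP => i; rewrite ffunE.
    have -> : [ffun i => y i] = y by apply/ffunP => i; rewrite ffunE.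
    have -> : [ffun i => x i || y i] = joinA x y by [].
    rewrite -/(F x) -/(F y) -/(F (joinA x y)) Fxy /R3b /=.
    move=> H; have {}H := H _; move: H.
    case: (F x); case: (F y) => //=; apply => i; by case: (x i); case: (y i).
  split => //.
  case: (classif mono meetP joinP) => [[i Hi]|[b Hb]].
  + left; exists i; apply/ffunP => x; by rewrite hF ffunE Hi.
  + right; exists b; apply/ffunP => x; by rewrite hF ffunE Hb.
- case=> Ht Hf; split => //=.
  case: Hf => [[i ->]|[b ->]].
  + split; [|split; [|split]]; try exact: preserves_proj.
    move=> j _; exact: preserves_proj.
  + split; [|split; [|split]]; try (apply: preserves_cst; by case: b).
    move=> j _; apply: preserves_cst; left; by exists b.
Qed.

Definition wit k : pfn k.+2 :=
  [ffun x => if x == pt (None : option 'I_k.+3) then Some true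
             else if [exists a, x == pt (Some a)] then Some false else None].

Lemma other k (a : 'I_k.+3) : exists c : 'I_k.+3, c != a.
Proof.
case: (eqVneq a ord0) => [->|H]; last by exists ord0; rewrite eq_sym.
by exists ord_max.
Qed.

Lemma other2 k (a b : 'I_k.+3) : exists c : 'I_k.+3, (c != a) && (c != b).
Proof.
apply: NNPP => nE.
have : #|'I_k.+3| <= #|[:: a; b]|.
  apply: subset_leq_card; apply/subsetP => c _.
  rewrite !inE; apply/negPn/negP => H; apply: nE; exists c.
  by move: H; rewrite negb_or.
rewrite card_ord => H; have := leq_trans H (card_size _); by [].
Qed.

Lemma pt_neq k (a : 'I_k.+3) : pt (Some a) != pt None.
Proof.
have [c ca] := other a; apply/eqP => /ffunP /(_ c); rewrite !ffunE.
by rewrite (negbTE ca).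
Qed.

Lemma wit_pt k (t : option 'I_k.+3) : wit k (pt t) = Some (t == None).
Proof.
rewrite ffunE; case: t => [a|] /=; last by rewrite eqxx.
rewrite (negbTE (pt_neq a)); case: existsP => // [[]]; by exists a.
Qed.

Lemma wit_dom k x v : wit k x = Some v ->
  (v = true /\ x = pt None) \/ (v = false /\ exists a, x = pt (Some a)).
Proof.
rewrite ffunE; case: eqP => [->|_]; first by case=> <-; left.
case: existsP => // [[a /eqP ->]] [<-]; right; split => //; by exists a.
Qed.

Section WitFacts.
Variable k : nat.
Variable I : Type.
Variable r : 'I_k.+3 -> I -> bool.
Variable vals : I -> bool.
Hypothesis Hv : forall t, wit k [ffun c => r c t] = Some (vals t).

Lemma D1 t : vals t = true -> forall c, r c t = true.
Proof.
move=> vt c; case: (wit_dom (Hv t)) => [[_ E]|[E _]]; last by rewrite vt in E.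
by move/ffunP: E => /(_ c); rewrite !ffunE.
Qed.

Lemma D2 t : vals t = false -> exists a, forall c, r c t = (c == a).
Proof.
move=> vt; case: (wit_dom (Hv t)) => [[E _]|[_ [a E]]]; first by rewrite vt in E.
exists a => c; by move/ffunP: E => /(_ c); rewrite !ffunE.
Qed.

Lemma D3 t : (forall c, r c t = true) -> vals t = true.
Proof.
move=> H; case vt: (vals t) => //; have [a Ha] := D2 vt.
have [c ca] := other a; by move: (H c); rewrite Ha (negbTE ca).
Qed.
End WitFacts.

Lemma wit_not_rho k : ~ preserves (wit k) (@rho k).
Proof.
move=> P.
have := P (fun c t => pt t c) _ (fun t => t == None).
case.
- move=> c; right; by exists c.
- move=> t; rewrite -wit_pt; congr (wit k _); apply/ffunP => c; by rewrite ffunE.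
- case=> b Hb; move: (Hb None) (Hb (Some ord0)) => /= <-; by [].
- case=> c Hc; move: (Hc (Some c)); by rewrite ffunE eqxx.
Qed.

Lemma wit_LE k : preserves (wit k) LE.
Proof.
move=> r Hr vals Hv; rewrite /LE; apply/implyP => v0.
apply: (D3 Hv) => c; have := Hr c; rewrite /LE (D1 Hv v0 c) /=; by [].
Qed.

Lemma wit_R3 k : preserves (wit k) R3.
Proof.
move=> r Hr vals Hv; rewrite /R3.
case v0: (vals t0); case v1: (vals t1); case v2: (vals t2) => //=.
- have [a Ha] := D2 Hv v2; have [c ca] := other a; have := Hr c.
  by rewrite /R3 (D1 Hv v0) (D1 Hv v1) Ha (negbTE ca).
- have [a Ha] := D2 Hv v1; have [c ca] := other a; have := Hr c.
  by rewrite /R3 (D1 Hv v0) (D1 Hv v2) Ha (negbTE ca).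
- have [a Ha] := D2 Hv v0; have [c ca] := other a; have := Hr c.
  by rewrite /R3 (D1 Hv v1) (D1 Hv v2) Ha (negbTE ca).
Qed.

Lemma wit_R3d k : preserves (wit k) R3d.
Proof.
move=> r Hr vals Hv; rewrite /R3d.
case v0: (vals t0); case v1: (vals t1); case v2: (vals t2) => //=.
- have [a Ha] := D2 Hv v1; have [b Hb] := D2 Hv v2.
  have [c /andP[ca cb]] := other2 a b; have := Hr c.
  by rewrite /R3d (D1 Hv v0) Ha Hb (negbTE ca) (negbTE cb).
- have [a Ha] := D2 Hv v0; have [b Hb] := D2 Hv v2.
  have [c /andP[ca cb]] := other2 a b; have := Hr c.
  by rewrite /R3d (D1 Hv v1) Ha Hb (negbTE ca) (negbTE cb).
- have [a Ha] := D2 Hv v0; have [b Hb] := D2 Hv v1.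
  have [c /andP[ca cb]] := other2 a b; have := Hr c.
  by rewrite /R3d (D1 Hv v2) Ha Hb (negbTE ca) (negbTE cb).
Qed.

Lemma wit_rho j k : j != k -> preserves (wit k) (@rho j).
Proof.
move=> jk r Hr vals Hv.
case vN: (vals None).
2:{ left; exists false => t; apply/negbTE/negP => vt.
    have [a Ha] := D2 Hv vN; have [c ca] := other a.
    have rcN : r c None = false by rewrite Ha (negbTE ca).
    case: (Hr c) => [[b Hb]|[p Hp]].
    - by move: (D1 Hv vt c) rcN; rewrite !Hb => ->.
    - by move: rcN; rewrite Hp ffunE. }
have rN := D1 Hv vN.
case: (classic (exists s s', s != s' /\ vals (Some s) = true /\ vals (Some s') = true)).
  case=> s [s' [ss' [vs vs']]]; left; exists true => t; apply: (D3 Hv) => c.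
  case: (Hr c) => [[b Hb]|[p Hp]].
  - by rewrite Hb -(Hb None) rN.
  - exfalso; move: (D1 Hv vs c) (D1 Hv vs' c); rewrite !Hp !ffunE => /eqP E /eqP E'.
    by move: ss'; rewrite -E -E' eqxx.
move=> nTwo.
case: (classic (exists s, vals (Some s) = true)).
  case=> s vs; right; exists s => -[s'|]; rewrite ffunE //=.
  case: (eqVneq s s') => [<-|ne] //.
  apply/negbTE/negP => vs'; apply: nTwo; exists s, s'; split => //; split => //.
move=> nOne; exfalso.
have vF : forall s, vals (Some s) = false.
  move=> s; apply/negbTE/negP => vs; apply: nOne; by exists s.
case: (classic (exists c0 b, forall t, r c0 t = b)).
  case=> c0 [b Hb].
  have Hb' : forall t, r c0 t = true by move=> t; rewrite Hb -(Hb None) rN.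
  have [c1 c10] := other c0.
  have rc1 : forall s, r c1 (Some s) = false.
    move=> s; have [a Ha] := D2 Hv (vF s).
    rewrite Ha; move: (Hb' (Some s)); rewrite Ha => /eqP <-; exact: negbTE.
  case: (Hr c1) => [[b1 Hb1]|[p Hp]].
  - by move: (rN c1) (rc1 ord0); rewrite !Hb1 => ->.
  - by move: (rc1 p); rewrite Hp ffunE eqxx.
move=> nConst.
have Hproj : forall c, exists p, forall t, r c t = pt t p.
  move=> c; case: (Hr c) => // H; case: nConst; by exists c.
pose pf c := odflt ord0 [pick s | r c (Some s)].
pose af s := odflt ord0 [pick c | r c (Some s)].
have Hpf : forall c s, r c (Some s) = (pf c == s).
  move=> c s; have [p Hp] := Hproj c; rewrite /pf; case: pickP => [s0 Hs0|H] /=.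
  - by move: Hs0; rewrite !Hp !ffunE => /eqP ->.
  - by move: (H p); rewrite Hp ffunE eqxx.
have Haf : forall c s, r c (Some s) = (c == af s).
  move=> c s; have [a Ha] := D2 Hv (vF s); rewrite /af; case: pickP => [c0 Hc0|H] /=.
  - by move: Hc0; rewrite !Ha => /eqP ->.
  - by move: (H a); rewrite Ha eqxx.
have K : forall s, pf (af s) = s by move=> s; apply/eqP; rewrite -Hpf Haf.
have K' : forall c, af (pf c) = c by move=> c; apply/eqP; rewrite eq_sym -Haf Hpf.
have af_inj : injective af by move=> s s' E; rewrite -(K s) E K.
have pf_inj : injective pf by move=> c c' E; rewrite -(K' c) E K'.
have := leq_card _ af_inj; have := leq_card _ pf_inj; rewrite !card_ord !ltnS.
move=> H1 H2; case/negP: jk; by rewrite eqn_leq H1 H2.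
Qed.

Lemma XS_wit S k : XS S (mkP (wit k)) <-> S k = true.
Proof.
split.
- case=> [_ [_ [_ H]]]; case Sk: (S k) => //; by case: (wit_not_rho (H k Sk)).
- move=> Sk; split; [exact: wit_LE|split; [exact: wit_R3|split; [exact: wit_R3d|]]].
  move=> j Sj; apply: wit_rho; apply/eqP => E; by rewrite E Sk in Sj.
Qed.

Definition XSt (S : nat -> bool) : T := exist _ (XS S) (conj (XS_clone S) (XS_C01 S)).

Lemma XSt_inj : injective XSt.
Proof.
move=> S S' E; have E' := congr1 (@proj1_sig _ _) E; simpl in E'.
apply: functional_extensionality => k.
have H : S k = true <-> S' k = true by rewrite -!XS_wit E'.
case: (S k) H; case: (S' k) => // [[H1 H2]]; [by rewrite H1 | by rewrite H2].
Qed.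

Theorem mainTheorem8 :
  exists F : (nat -> bool) -> {X : pfun -> Prop | in_Istr_C01 X}, bijective F.
Proof. exact: (SB_bij XSt_inj code_inj). Qed.
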